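(* Let $\Gamma$ be an Arf numerical semigroup with conductor $c$, let $e'\in\Gamma\setminus\{0\}$, and let $a,b\in\mathbb Z$ with $a\ge2$ and $b\ge c$. Then \[ E\big(a\Gamma_{e'}\cup(a(b+e')+\mathbb N),2\big)=\min\{a e',\,E(a\Gamma\cup(ab+\mathbb N),2)+1\}. \] Furthermore, if $\Gamma$ has multiplicity sequence $(d_1,\dots,d_r)$, then \[ E(a\Gamma\cup(ab+\mathbb N),2)=\min\{ad_1,\,ad_2+1,\,\dots,\,ad_{r-1}+r-2,\,a+r-1,\,(b-c)+r\}. \]
   Context: A numerical semigroup is a subset $\Gamma\subseteq\mathbb N$ containing $0$, closed under addition, with finite complement; write $\Gamma=\{0=\rho_1<\rho_2<\cdots\}$, conductor $c=\rho_r$ (least $c$ with $c+\mathbb N\subseteq\Gamma$), genus $g=|\mathbb N\setminus\Gamma|$. $\Gamma$ is Arf if $\rho_i+\rho_j-\rho_k\in\Gamma$ for all $i\ge j\ge k$. Multiplicity sequence: $(d_1,\dots,d_r)$ with $d_i=\rho_{i+1}-\rho_i$. $\Gamma_{e'}=\{0\}\cup(e'+\Gamma)$; $aS=\{as:s\in S\}$; $ab+\mathbb N=\{ab+n:n\in\mathbb N\}$. For a numerical semigroup $S$ with conductor $c_S$ and genus $g_S$, let $D_S(x)=\{s\in S:x-s\in S\}$ and $\delta^2_S(m)=\min\{|D_S(m_1)\cup D_S(m_2)|: m\le m_1<m_2,\ m_i\in S\}$; the second Feng-Rao number $E(S,2)$ is the integer with $\delta^2_S(m)=m+1-2g_S+E(S,2)$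 for all $m\ge 2c_S-1$. *)

(* Defs.v *)
From mathcomp Require Import all_boot all_order all_algebra.
Set Implicit Arguments. Unset Strict Implicit. Unset Printing Implicit Defensive.
Import Order.TTheory GRing.Theory Num.Theory.

Definition numerical_semigroup (S : pred nat) : Prop :=
  [/\ S 0, (forall x y, S x -> S y -> S (x + y)) &
      (exists N, forall n, N <= n -> S n)].

Definition is_conductor (S : pred nat) (c : nat) : Prop :=
  (forall n, c <= n -> S n) /\
  (forall c', (forall n, c' <= n -> S n) -> c <= c').

(* genus, given the conductor c: number of gaps (all gaps are < c) *)
Definition genus_below (S : pred nat) (c : nat) : nat :=
  count (fun n => ~~ S n) (iota 0 c).

Definition arf (S : pred nat) : Prop :=
  forall x y z, S x -> S y -> S z -> y <= x -> z <= y -> S (x + y - z).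

(* Multiplicity sequence (d_1,...,d_r), d_i = rho_(i+1) - rho_i, where
   rho_1 < ... < rho_r = c are the elements of S up to the conductor c. *)
Definition mult_seq (S : pred nat) (ds : seq nat) : Prop :=
  exists c, is_conductor S c /\
    let rs := [seq n <- iota 0 c.+2 | S n] in   (* rho_1, ..., rho_r, rho_(r+1) *)
    ds = [seq nth 0 rs i.+1 - nth 0 rs i | i <- iota 0 (size rs).-1].

(* Gamma_{e'} = {0} U (e' + Gamma) *)
Definition shiftS (S : pred nat) (e : nat) : pred nat :=
  fun x => (x == 0) || ((e <= x) && S (x - e)).

(* a S = {a s : s in S}  (for a >= 1) *)
Definition scaleS (a : nat) (S : pred nat) : pred nat :=
  fun x => (a %| x) && S (x %/ a).

Definition unionTail (A : pred nat) (k : nat) : pred nat :=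
  fun x => A x || (k <= x).

Definition inD (S : pred nat) (x s : nat) : bool := [&& s <= x, S s & S (x - s)].

(* |D_S(m1) U D_S(m2)| for m1 < m2 (all elements are <= m2) *)
Definition cardDU (S : pred nat) (m1 m2 : nat) : nat :=
  count (fun s => inD S m1 s || inD S m2 s) (iota 0 m2.+1).

Definition is_delta2 (S : pred nat) (m d : nat) : Prop :=
  (exists m1 m2, [/\ m <= m1, m1 < m2, S m1, S m2 & cardDU S m1 m2 = d]) /\
  (forall m1 m2, m <= m1 -> m1 < m2 -> S m1 -> S m2 -> d <= cardDU S m1 m2).

Definition FengRao2 (S : pred nat) (E : int) : Prop :=
  exists c, is_conductor S c /\
    forall m : nat, 2 * c <= m + 1 ->
      exists d, is_delta2 S m d /\
        (d%:Z = m%:Z + 1 - 2 * (genus_below S c)%:Z + E)%R.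

(* Main.v *)
Require Import Defs.
From mathcomp Require Import all_boot all_order all_algebra.
From mathcomp Require Import zify.
Import Order.TTheory GRing.Theory Num.Theory.

Lemma count_le_in (T : eqType) (P Q : pred T) (s : seq T) :
  (forall x, x \in s -> P x -> Q x) -> count P s <= count Q s.
Proof.
elim: s => //= x s IH H.
have H1 : forall y, y \in s -> P y -> Q y by move=> y ys; apply: H; rewrite inE ys orbT.
have := IH H1; case Px: (P x) => /=.
  by rewrite (H x (mem_head _ _) Px) /= ltnS.
by move=> h; apply: leq_trans h (leq_addl _ _).
Qed.

Lemma cnt_split (P : pred nat) m n : m <= n ->
  count P (iota 0 n) = count P (iota 0 m) + count P (iota m (n - m)).
Proof. by move=> h; rewrite -{1}(subnKC h) iotaD count_cat. Qed.

Lemma cnt_mono (P : pred nat) m n : m <= n -> count P (iota 0 m) <= count P (iota 0 n).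
Proof. by move=> h; rewrite (@cnt_split P m n h) leq_addr. Qed.

Lemma cnt_S (P : pred nat) n : count P (iota 0 n.+1) = count P (iota 0 n) + P n.
Proof. by rewrite -addn1 iotaD count_cat /= addn0. Qed.

Lemma cnt_gap (P : pred nat) m n : m <= n ->
  count P (iota 0 n) <= count P (iota 0 m) + (n - m).
Proof.
move=> h; rewrite (@cnt_split P m n h) leq_add2l.
by apply: leq_trans (count_size _ _) _; rewrite size_iota.
Qed.

Lemma cnt_lt (P : pred nat) m n :
  count (fun x => P x && (x < m)) (iota 0 n) <= count P (iota 0 m).
Proof.
case: (leqP m n) => h.
  rewrite (@cnt_split _ m n h) -[X in _ <= X]addn0; apply: leq_add.
    by apply: sub_count => x /andP[].
  rewrite leqn0 -(count_pred0 (iota m (n - m))); apply/eqP/eq_in_count => x.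
  by rewrite mem_iota => /andP[hx _] /=; rewrite ltnNge hx andbF.
apply: leq_trans (@cnt_mono P n m (ltnW h)).
by apply: sub_count => x /andP[].
Qed.

Lemma cnt_lt_eq (P : pred nat) m n : m <= n ->
  count (fun x => P x && (x < m)) (iota 0 n) = count P (iota 0 m).
Proof.
move=> h; rewrite (@cnt_split _ m n h).
have -> : count (fun x => P x && (x < m)) (iota m (n - m)) = 0.
  rewrite -(count_pred0 (iota m (n - m))); apply/eq_in_count => x.
  by rewrite mem_iota => /andP[hx _] /=; rewrite ltnNge hx andbF.
rewrite addn0; apply/eq_in_count => x; rewrite mem_iota => /andP[_ hx] /=.
by rewrite hx andbT.
Qed.

Lemma cnt_rev (P : pred nat) x :
  count (fun s => P (x - s)) (iota 0 x.+1) = count P (iota 0 x.+1).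
Proof.
elim: x => [|x IH]; first by [].
rewrite [RHS]cnt_S -IH.
have -> : iota 0 x.+2 = 0 :: iota (1 + 0) x.+1 by [].
rewrite iotaDl /= count_map subn0 addnC; congr (_ + _); by apply: eq_count => s /=; rewrite add1n subSS.
Qed.

Lemma cnt_scale (Q : pred nat) a b : 0 < a ->
  count (fun t => (a %| t) && Q (t %/ a)) (iota 0 (a * b)) = count Q (iota 0 b).
Proof.
move=> a0; elim: b => [|b IH]; first by rewrite muln0.
rewrite mulnS addnC iotaD count_cat IH cnt_S; congr (_ + _).
rewrite add0n -(addn0 (a * b)) iotaDl count_map.
case: a a0 {IH} => // a _ /=.
rewrite addn0 dvdn_mulr // mulKn //= -[RHS]addn0; congr (_ + _).
rewrite (@eq_in_count _ _ pred0) ?count_pred0 // => t.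
rewrite mem_iota => /andP[t1 t2] /=.
rewrite (dvdn_addr _ (dvdn_mulr _ (dvdnn _))).
suff -> : (a.+1 %| t) = false by [].
apply/negbTE; rewrite /dvdn modn_small; [by rewrite -lt0n | by rewrite add1n in t2].
Qed.

Definition NS (S : pred nat) C k := count (fun t => S t && ~~ S (t + k)) (iota 0 C).

Lemma cnt_notS S C x : is_conductor S C -> C <= x ->
  count (fun s => ~~ S s) (iota 0 x) = genus_below S C.
Proof.
move=> [hC _] h; rewrite (@cnt_split _ C x h) /genus_below -[RHS]addn0; congr (_ + _).
rewrite (@eq_in_count _ _ pred0) ?count_pred0 // => t.
by rewrite mem_iota => /andP[t1 _] /=; rewrite hC.
Qed.

Lemma cardD_eq S C x : is_conductor S C -> 2 * C <= x + 1 ->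
  count (inD S x) (iota 0 x.+1) + 2 * genus_below S C = x.+1.
Proof.
move=> hC hx; have [hC1 _] := hC.
have Cx : C <= x.+1 by lia.
rewrite -[RHS](size_iota 0 x.+1) -(count_predC (inD S x)); congr (_ + _).
rewrite (@eq_in_count _ _ (predU (fun s => ~~ S s) (fun s => ~~ S (x - s)))); last first.
  move=> s; rewrite mem_iota leq0n add0n /= /inD => hs.
  by rewrite -ltnS hs /=; case: (S s); case: (S (x - s)).
apply/eqP; rewrite -(eqn_add2r (count (predI (fun s => ~~ S s) (fun s => ~~ S (x - s))) (iota 0 x.+1))).
rewrite count_predUI.
rewrite (@eq_in_count _ (predI _ _) pred0) ?count_pred0; last first.
  move=> s; rewrite mem_iota leq0n add0n /= => hs.
  case: (boolP (S s)) => //= h1; case: (boolP (S (x - s))) => //= h2.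
  have : s < C by case: (leqP C s) h1 => // /hC1 ->.
  have : x - s < C by case: (leqP C (x - s)) h2 => // /hC1 ->.
  lia.
rewrite (cnt_rev (fun s => ~~ S s)) (@cnt_notS S C x.+1 hC Cx); apply/eqP; lia.
Qed.

Lemma count_orD (T : Type) (p q : pred T) s :
  count (fun x => p x || q x) s = count q s + count (fun x => p x && ~~ q x) s.
Proof.
elim: s => //= x s ->; case: (p x); case: (q x) => /=; rewrite ?add0n ?addn0;
  lia.
Qed.

Lemma cardDU_eq S C m1 m2 : is_conductor S C -> 2 * C <= m1 + 1 -> m1 < m2 ->
  cardDU S m1 m2 + 2 * genus_below S C = m2.+1 + NS S C (m2 - m1).
Proof.
move=> hC hm hlt; have [hC1 _] := hC.
rewrite /cardDU count_orD addnAC (@cardD_eq S C m2 hC); last by lia.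
congr (_ + _).
have h1 : m1.+1 <= m2.+1 by lia.
rewrite (@cnt_split _ m1.+1 m2.+1 h1).
rewrite [X in _ + X](@eq_in_count _ _ pred0) ?count_pred0 ?addn0; last first.
  by move=> s; rewrite mem_iota /= /inD => /andP[hs _]; rewrite leqNgt hs.
pose k := m2 - m1.
pose P t := S (m1 - t) && S t && ~~ S (t + k).
rewrite (@eq_in_count _ _ (fun s => P (m1 - s))); last first.
  move=> s; rewrite mem_iota leq0n add0n /= /inD /P => hs.
  have -> : m1 - (m1 - s) = s by lia.
  have -> : m1 - s + k = m2 - s by rewrite /k; lia.
  rewrite -ltnS hs /= (_ : s <= m2); last by lia.
  by case: (S s); case: (S (m1 - s)); case: (S (m2 - s)).
rewrite (cnt_rev P).
have hC2 : C <= m1.+1 by lia.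
rewrite /NS (@cnt_split _ C m1.+1 hC2).
rewrite [X in _ + X](@eq_in_count _ _ pred0) ?count_pred0 ?addn0; last first.
  move=> t; rewrite mem_iota /P => /andP[ht _].
  by rewrite (hC1 (t + k)) ?andbF //; lia.
apply: eq_in_count => t; rewrite mem_iota /P => /andP[_ ht].
by rewrite (hC1 (m1 - t)) //; lia.
Qed.

Lemma genus_le S C : genus_below S C <= C.
Proof. by rewrite /genus_below; apply: leq_trans (count_size _ _) _; rewrite size_iota. Qed.

Lemma FR_of_min S C F : is_conductor S C ->
  (exists2 k, 0 < k & k + NS S C k = F) ->
  (forall k, 0 < k -> F <= k + NS S C k) -> FengRao2 S (Posz F).
Proof.
move=> hC [k k0 hk] hmin; have [hC1 _] := hC.
exists C; split => // m hm.
have gC := genus_le S C.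
exists (m.+1 + F - 2 * genus_below S C); split; last by lia.
split.
  exists m, (m + k); split => //; first by lia.
  - by apply: hC1; lia.
  - by apply: hC1; lia.
  have := @cardDU_eq S C m (m + k) hC hm; rewrite (_ : m + k - m = k); lia.
move=> m1 m2 h1 h2 _ _.
have := @cardDU_eq S C m1 m2 hC; have := hmin (m2 - m1); lia.
Qed.

Lemma cond_uniq S c1 c2 : is_conductor S c1 -> is_conductor S c2 -> c1 = c2.
Proof.
move=> [h1 h1'] [h2 h2']; apply/eqP; rewrite eqn_leq h1' // h2' //.
Qed.

Lemma FR_uniq S E1 E2 : FengRao2 S E1 -> FengRao2 S E2 -> E1 = E2.
Proof.
move=> [c1 [hc1 H1]] [c2 [hc2 H2]].
have ec := @cond_uniq S c1 c2 hc1 hc2; subst c2.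
have hm : 2 * c1 <= (2 * c1) + 1 by lia.
have [d1 [[[x1 [y1 [a1 b1 c1' d1' e1]]] L1] Q1]] := H1 _ hm.
have [d2 [[[x2 [y2 [a2 b2 c2' d2' e2]]] L2] Q2]] := H2 _ hm.
have : d1 <= d2 by rewrite -e2; apply: L1.
have : d2 <= d1 by rewrite -e1; apply: L2.
move: Q1 Q2; lia.
Qed.

Lemma min_exists S C : exists F,
  (exists2 k, 0 < k & k + NS S C k = F) /\ (forall k, 0 < k -> F <= k + NS S C k).
Proof.
pose P v := has (fun k => (0 < k) && (k + NS S C k == v)) (iota 0 v.+1).
have PP : forall k, 0 < k -> P (k + NS S C k).
  move=> k k0; apply/hasP; exists k; last by rewrite k0 eqxx.
  by rewrite mem_iota /=; lia.
have ex : exists v, P v by exists (1 + NS S C 1); apply: PP.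
case: (ex_minnP ex) => v Pv vmin; exists v; split.
  by case/hasP: Pv => k _ /andP[k0 /eqP <-]; exists k.
by move=> k k0; apply: vmin; apply: PP.
Qed.

Lemma cond_scale P a n : 2 <= a -> is_conductor (unionTail (scaleS a P) (a * n)) (a * n).
Proof.
move=> a2; split; first by move=> x hx; rewrite /unionTail hx orbT.
move=> c' hc'; case: (leqP (a * n) c') => // hlt.
have n0 : 0 < a * n by lia.
have := hc' (a * n - 1); rewrite /unionTail /scaleS.
rewrite (_ : a * n <= a * n - 1 = false); last by lia.
rewrite orbF => H; have /andP[hd _] := H ltac:(lia).
have : a %| a * n - (a * n - 1) by apply: dvdn_sub => //; apply: dvdn_mulr.
rewrite (_ : a * n - (a * n - 1) = 1); last by lia.
by rewrite dvdn1 => /eqP a1; move: a2; rewrite a1.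
Qed.

Section Shift.
Variables (G : pred nat) (a b e : nat).
Hypotheses (a0 : 0 < a) (e0 : 0 < e).
Let S := unionTail (scaleS a G) (a * b).
Let S' := unionTail (scaleS a (shiftS G e)) (a * (b + e)).

Lemma S'_shift x : S' (a * e + x) = S x.
Proof.
rewrite /S' /S /unionTail /scaleS.
rewrite (dvdn_addr _ (dvdn_mulr _ (dvdnn _))).
rewrite (_ : (a * (b + e) <= a * e + x) = (a * b <= x)); last first.
  by rewrite mulnDr addnC leq_add2l.
case: (boolP (a %| x)) => //= hx.
rewrite divnDl ?dvdn_mulr // mulKn // /shiftS.
rewrite (_ : (e + x %/ a == 0) = false); last by lia.
by rewrite leq_addr /= addKn.
Qed.

Lemma S'_small t : 0 < t -> t < a * e -> ~~ S' t.
Proof.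
move=> t0 te; rewrite /S' /unionTail /scaleS.
rewrite (_ : (a * (b + e) <= t) = false); last by rewrite mulnDr; lia.
rewrite orbF; apply/negP => /andP[hd hs]; move: hs.
rewrite /shiftS => /orP[/eqP h|/andP[h _]].
  by move: t0; rewrite -(divnK hd) h.
move: te; rewrite -(divnK hd) => te; have := leq_mul h (leqnn a); lia.
Qed.

Lemma S'_0 : S' 0.
Proof. by rewrite /S' /unionTail /scaleS /shiftS dvdn0 div0n. Qed.

Lemma NS_shift k : NS S' (a * (b + e)) k = ~~ S' k + NS S (a * b) k.
Proof.
rewrite /NS mulnDr addnC iotaD count_cat add0n; congr (_ + _).
  have ae : 0 < a * e by rewrite muln_gt0 a0.
  rewrite -(prednK ae) /= S'_0 add0n /=.
  rewrite (@eq_in_count _ _ pred0) ?count_pred0 ?addn0 // => t.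
  rewrite mem_iota => /andP[t1 t2] /=.
  by rewrite (negbTE (@S'_small t t1 _)) //; rewrite -(prednK ae); lia.
rewrite -(addn0 (a * e)) iotaDl count_map; apply: eq_count => t /=.
by rewrite S'_shift -addnA S'_shift.
Qed.

End Shift.

Lemma min_Posz (m n : nat) : Num.min (Posz m) (Posz n) = Posz (minn m n).
Proof.
case: (leqP m n) => h.
  by rewrite min_l // lez_nat.
by rewrite min_r // lez_nat ltnW.
Qed.

Lemma part1 (G : pred nat) (e a b : nat) :
  numerical_semigroup G -> G e -> 0 < e -> 2 <= a ->
  forall E2 : int,
     FengRao2 (unionTail (scaleS a G) (a * b)) E2 ->
     FengRao2 (unionTail (scaleS a (shiftS G e)) (a * (b + e)))
              (Num.min (Posz (a * e)) (E2 + 1)%R).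
Proof.
move=> [G0 Gadd _] Ge e0 a2 E2 HE.
have a0 : 0 < a by lia.
set S := unionTail (scaleS a G) (a * b).
set S' := unionTail (scaleS a (shiftS G e)) (a * (b + e)).
have [F [[k0 k00 hk0] hmin]] := min_exists S (a * b).
have hS := @FR_of_min S (a * b) F (@cond_scale G a b a2) (ex_intro2 _ _ k0 k00 hk0) hmin.
have e1 : (Posz F + 1)%R = Posz F.+1 by rewrite -addn1 PoszD.
rewrite (@FR_uniq _ _ _ HE hS) e1 min_Posz.
have Sae : forall t, S t -> S (t + a * e).
  move=> t; rewrite /S /unionTail /scaleS => /orP[/andP[hd hg]|hb]; last first.
    by rewrite (leq_trans hb (leq_addr _ _)) orbT.
  rewrite dvdn_addr ?dvdn_mulr //= divnDr ?dvdn_mulr // mulKn //.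
  by rewrite Gadd.
have NSae : NS S (a * b) (a * e) = 0.
  rewrite /NS (@eq_in_count _ _ pred0) ?count_pred0 // => t _ /=.
  by case: (boolP (S t)) => //= /Sae ->.
have S'ae : S' (a * e).
  have := @S'_shift G a b e a0 e0 0; rewrite addn0 /S' => ->.
  by rewrite /unionTail /scaleS dvdn0 div0n G0.
have NS' : forall k, NS S' (a * (b + e)) k = ~~ S' k + NS S (a * b) k := @NS_shift G a b e a0 e0.
have smallS' : forall k, 0 < k -> S' k -> a * e <= k.
  move=> k kk hk; case: (leqP (a * e) k) => // hlt.
  by move: hk; rewrite /S' (negbTE (@S'_small G a b e a0 e0 k kk hlt)).
apply: (@FR_of_min S' (a * (b + e)) _ (@cond_scale (shiftS G e) a (b + e) a2)).
  case: (leqP (a * e) F.+1) => h.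
    exists (a * e); first by rewrite muln_gt0 a0.
    by rewrite NS' S'ae NSae /= !addn0.
  exists k0 => //.
  case: (boolP (S' k0)) => hk.
    by have := smallS' k0 k00 hk; lia.
  by rewrite NS' hk -hk0; lia.
move=> k kk; rewrite NS' -/S' -/S; case: (boolP (S' k)) => hk.
  by have := smallS' k kk hk; lia.
by have := hmin k kk; lia.
Qed.

Lemma nth_filter_iota (P : pred nat) n x : x < n -> P x ->
  nth 0 [seq y <- iota 0 n | P y] (count P (iota 0 x)) = x.
Proof.
move=> xn Px.
have -> : n = x + (1 + (n - x.+1)) by lia.
rewrite iotaD filter_cat nth_cat size_filter ltnn subnn iotaD /= Px /=.
by [].
Qed.

Section RS.
Variables (P : pred nat) (n : nat).
Let rs := [seq y <- iota 0 n | P y].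

Lemma rs_mem i : i < size rs -> P (nth 0 rs i) /\ nth 0 rs i < n.
Proof.
move=> hi; have := mem_nth 0 hi; rewrite mem_filter mem_iota.
by case/andP=> -> /andP[_]; rewrite add0n.
Qed.

Lemma rs_cnt i : i < size rs -> count P (iota 0 (nth 0 rs i)) = i.
Proof.
move=> hi; have [Px xn] := @rs_mem i hi.
have hu : uniq rs by rewrite filter_uniq // iota_uniq.
have hc : count P (iota 0 (nth 0 rs i)) < size rs.
  rewrite /rs size_filter; apply: leq_trans (@cnt_mono P _ _ xn).
  by rewrite cnt_S Px addn1.
apply/eqP; rewrite -(nth_uniq 0 hc hi hu).
by rewrite /rs nth_filter_iota.
Qed.

Lemma rs_next i y : i.+1 < size rs -> P y -> nth 0 rs i < y -> nth 0 rs i.+1 <= y.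
Proof.
move=> hi Py hlt; rewrite leqNgt; apply/negP => hy.
have hi' : i < size rs by lia.
have e1 := @rs_cnt i hi'; have e2 := @rs_cnt i.+1 hi.
have [Px _] := @rs_mem i hi'.
have := @cnt_mono P y.+1 (nth 0 rs i.+1) hy.
have := @cnt_mono P (nth 0 rs i).+1 y hlt.
rewrite !cnt_S Px Py e1 e2; lia.
Qed.

Lemma rs_lt i : i.+1 < size rs -> nth 0 rs i < nth 0 rs i.+1.
Proof.
move=> hi; rewrite ltnNge; apply/negP => h.
have hi' : i < size rs by lia.
have := @cnt_mono P _ _ h; rewrite (@rs_cnt _ hi) (@rs_cnt _ hi'); lia.
Qed.

End RS.

Lemma foldr_min_le (x0 : nat) l y : y \in l -> foldr minn x0 l <= y.
Proof.
elim: l => //= z l IH; rewrite inE => /orP[/eqP ->|/IH h]; first by apply: geq_minl.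
by apply: leq_trans (geq_minr _ _) h.
Qed.

Lemma foldr_min_le0 (x0 : nat) l : foldr minn x0 l <= x0.
Proof. by elim: l => //= z l IH; apply: leq_trans (geq_minr _ _) IH. Qed.

Lemma foldr_min_mem (x0 : nat) l : foldr minn x0 l = x0 \/ foldr minn x0 l \in l.
Proof.
elim: l => /= [|z l [IH|IH]]; first by left.
- rewrite IH; case: (leqP z x0) => _; [right; exact: mem_head | by left].
- case: (leqP z (foldr minn x0 l)) => _; right; first exact: mem_head.
  by rewrite inE IH orbT.
Qed.

Lemma part2 (G : pred nat) (c a b : nat) (ds : seq nat) :
  arf G -> is_conductor G c -> 2 <= a -> c <= b -> mult_seq G ds ->
  let r := size ds in
     FengRao2 (unionTail (scaleS a G) (a * b))
       (Posz (foldr minn (b - c + r)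
          ([seq a * nth 0 ds i + i | i <- iota 0 r.-1] ++ [:: a + r - 1]))).
Proof.
move=> arfG hc a2 bc [c' [hc' hds]] r.
have ec := @cond_uniq G c' c hc' hc; subst c'.
cbv zeta in hds.
set rs := [seq n <- iota 0 c.+2 | G n] in hds.
have [hc1 hc2] := hc.
have a0 : 0 < a by lia.
pose cnt x := count G (iota 0 x).
have srs : size rs = cnt c + 2.
  rewrite /rs size_filter !cnt_S (hc1 c) // (hc1 c.+1) //= /cnt -addnA.
  by congr (_ + _); apply: eq_count.
have hr : r = cnt c + 1 by rewrite /r hds size_map size_iota srs addn2 addn1.
have nds : forall i, i < r -> nth 0 ds i = nth 0 rs i.+1 - nth 0 rs i.
  move=> i hi; rewrite hds (nth_map 0); last by rewrite size_iota srs; lia.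
  by rewrite nth_iota ?add0n //; rewrite srs; lia.
have rsc : nth 0 rs (cnt c) = c by rewrite /rs nth_filter_iota // hc1.
have rsc1 : nth 0 rs (cnt c).+1 = c.+1.
  have -> : (cnt c).+1 = count G (iota 0 c.+1) by rewrite cnt_S (hc1 c) // addn1.
  by rewrite /rs nth_filter_iota // hc1.
have dlast : nth 0 ds (r.-1) = 1.
  by rewrite nds hr addn1 //= rsc1 rsc subSnn.
set F := foldr minn _ _.
set S := unionTail (scaleS a G) (a * b).
have Sin : forall t, t < a * b -> S t = (a %| t) && G (t %/ a).
  by move=> t ht; rewrite /S /unionTail leqNgt ht orbF.
have Smul : forall x, G x -> S (a * x).
  by move=> x gx; rewrite /S /unionTail /scaleS dvdn_mulr // mulKn // gx.
have upB : forall (Q : pred nat) k,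
    (forall t, t < a * b -> S t -> ~~ S (t + k) -> Q (t %/ a)) ->
    NS S (a * b) k <= count Q (iota 0 b).
  move=> Q k hQ; rewrite -(@cnt_scale Q a b a0) /NS; apply: count_le_in => t.
  rewrite mem_iota add0n => /andP[_ ht] /andP[st nst].
  by move: (st); rewrite Sin // => /andP[-> _]; rewrite hQ.
have lowB : forall (Q : pred nat) k,
    (forall x, x < b -> G x -> Q x -> ~~ S (a * x + k)) ->
    count (fun x => G x && Q x) (iota 0 b) <= NS S (a * b) k.
  move=> Q k hQ; rewrite -(@cnt_scale _ a b a0) /NS; apply: count_le_in => t.
  rewrite mem_iota add0n => /andP[_ ht] /andP[hd /andP[gx qx]].
  have et : t = a * (t %/ a) by rewrite mulnC divnK.
  rewrite Sin // hd gx /= {1}et hQ //.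
  by move: ht; rewrite {1}et ltn_mul2l => /andP[].
have cntb : cnt b = cnt c + (b - c).
  rewrite /cnt (@cnt_split _ c b bc); congr (_ + _).
  rewrite (@eq_in_count _ _ predT) ?count_predT ?size_iota // => x.
  by rewrite mem_iota => /andP[hx _]; rewrite /= hc1.
have Fle : forall i, i < r -> F <= a * nth 0 ds i + i.
  move=> i hi; apply: foldr_min_le; rewrite mem_cat; apply/orP.
  case: (ltnP i r.-1) => h.
    by left; apply/mapP; exists i => //; rewrite mem_iota.
  have -> : i = r.-1 by lia.
  by right; rewrite dlast muln1 inE; apply/eqP; lia.
have witi : forall i, i < r -> exists2 k, 0 < k & k + NS S (a * b) k <= a * nth 0 ds i + i.
  move=> i hi.
  have hi1 : i.+1 < size rs by lia.
  have hi0 : i < size rs by lia.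
  have [gx _] := @rs_mem G c.+2 i hi0.
  have [gy _] := @rs_mem G c.+2 i.+1 hi1.
  have xy := @rs_lt G c.+2 i hi1.
  set x := nth 0 rs i in gx xy; set y := nth 0 rs i.+1 in gy xy.
  exists (a * (y - x)); first by rewrite muln_gt0 a0 subn_gt0.
  rewrite nds // -/x -/y leq_add2l.
  rewrite -(@rs_cnt G c.+2 i hi0) -/x.
  apply: leq_trans (cnt_lt G x b).
  apply: upB => t ht st; move: (st); rewrite Sin // => /andP[hd gr].
  apply: contraR; rewrite gr /= -leqNgt => hxr.
  have et : t = a * (t %/ a) by rewrite mulnC divnK.
  have -> : t + a * (y - x) = a * (t %/ a + (y - x)) by rewrite {1}et mulnDr.
  apply: Smul.
  case: (ltnP (t %/ a) y) => h2.
    have ex : t %/ a = x.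
      case: (ltnP x (t %/ a)) => h3; last by apply/eqP; rewrite eqn_leq hxr h3.
      by have := @rs_next G c.+2 i (t %/ a) hi1 gr h3; rewrite -/y; lia.
    by rewrite ex subnKC ?(ltnW xy).
  have := arfG _ _ _ gr gy gx h2 (ltnW xy).
  by rewrite (_ : t %/ a + y - x = t %/ a + (y - x)) //; lia.
have Fx0 : F <= b - c + r by apply: foldr_min_le0.
move: cntb hr srs; rewrite /cnt => cntb hr srs.
have wit : exists2 k, 0 < k & k + NS S (a * b) k <= F.
  have := foldr_min_mem (b - c + r) ([seq a * nth 0 ds i + i | i <- iota 0 r.-1] ++ [:: a + r - 1]).
  rewrite -/F => -[hF|].
    exists 1 => //.
    have : NS S (a * b) 1 <= count G (iota 0 b).
      by apply: upB => t ht st _; move: st; rewrite Sin // => /andP[_ ->].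
    lia.
  rewrite mem_cat => /orP[/mapP[i hi ->]|].
    by apply: witi; move: hi; rewrite mem_iota; lia.
  rewrite inE => /eqP ->.
  have hr1 : r.-1 < r by lia.
  have [k k0 hk] := witi _ hr1; exists k => //; move: hk; rewrite dlast; lia.
have lower : forall k, 0 < k -> F <= k + NS S (a * b) k.
  move=> k k0.
  case: (boolP (a %| k)) => hk.
    set j := k %/ a.
    have kj : k = a * j by rewrite /j mulnC divnK.
    have j0 : 0 < j by move: k0; rewrite kj muln_gt0 => /andP[].
    have ex : exists x, G x && G (x + j) by exists c; rewrite !hc1 //; lia.
    case: (ex_minnP ex) => p /andP[gp gpj] pmin.
    have pc : p <= c by apply: pmin; rewrite !hc1 //; lia.
    pose i := count G (iota 0 p).
    have ir : i < r by have := @cnt_mono G p c pc; rewrite hr /i; lia.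
    have hi0 : i < size rs by lia.
    have hi1 : i.+1 < size rs by lia.
    have xp : nth 0 rs i = p by rewrite /i /rs nth_filter_iota //; lia.
    have yp : nth 0 rs i.+1 <= p + j.
      by apply: (@rs_next G c.+2 i (p + j) hi1 gpj); rewrite xp; lia.
    have dj : nth 0 ds i <= j by rewrite nds // xp; lia.
    have noG : forall x, G x -> x < p -> ~~ G (x + j).
      move=> x gx xp'; apply/negP => gxj.
      by have := pmin x; rewrite gx gxj => /(_ isT); lia.
    have noS : forall x, G x -> x < p -> x + j < b -> ~~ S (a * x + k).
      move=> x gx xp' xb; rewrite kj -mulnDr Sin; last by rewrite ltn_mul2l a0.
      by rewrite dvdn_mulr //= mulKn // (negbTE (noG x gx xp')).
    case: (leqP (p + j) b) => hpb.
      have := @lowB (fun x => x < p) k.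
      rewrite (@cnt_lt_eq G p b); last by lia.
      move=> /(_ _) H; have {}H := H (fun x xb gx xp' => noS x gx xp' ltac:(lia)).
      have := Fle i ir; have := @leq_mul2l a (nth 0 ds i) j; rewrite dj orbT.
      rewrite /i; lia.
    have := @lowB (fun x => x < b - j) k.
    rewrite (@cnt_lt_eq G (b - j) b); last by lia.
    move=> /(_ _) H; have {}H := H (fun x xb gx xp' => noS x gx ltac:(lia) ltac:(lia)).
    have := @cnt_gap G (b - j) b ltac:(lia).
    have := @leq_mul2r j 2 a; rewrite a2 orbT.
    lia.
  set j := k %/ a.
  have kj : k = j * a + k %% a by rewrite /j -divn_eq.
  have km : 0 < k %% a by rewrite lt0n; apply: contraNneq hk => /eqP; rewrite -/(dvdn a k).
  have noS : forall x, x < b - j -> ~~ S (a * x + k).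
    move=> x xb; rewrite Sin.
      by rewrite dvdn_addr ?dvdn_mulr // (negbTE hk).
    have : a * (x + j + 1) <= a * b by rewrite leq_mul2l; apply/orP; right; lia.
    have := ltn_pmod k a0.
    have e := kj; rewrite mulnC in e.
    rewrite !mulnDr muln1; lia.
  have := @lowB (fun x => x < b - j) k (fun x _ _ xb => noS x xb).
  rewrite (@cnt_lt_eq G (b - j) b); last by lia.
  have := @cnt_gap G (b - j) b ltac:(lia).
  have := @leq_pmulr j a a0.
  lia.
have [k k0 hk] := wit.
apply: (@FR_of_min S (a * b) F (@cond_scale G a b a2)) => //.
by exists k => //; apply/eqP; rewrite eqn_leq hk lower.
Qed.

Theorem corollary3p12 (G : pred nat) (c e a b : nat) :
  numerical_semigroup G -> arf G -> is_conductor G c ->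
  G e -> 0 < e -> 2 <= a -> c <= b ->
  (forall E2 : int,
     FengRao2 (unionTail (scaleS a G) (a * b)) E2 ->
     FengRao2 (unionTail (scaleS a (shiftS G e)) (a * (b + e)))
              (Num.min (Posz (a * e)) (E2 + 1)%R)) /\
  (forall ds : seq nat, mult_seq G ds ->
     let r := size ds in
     FengRao2 (unionTail (scaleS a G) (a * b))
       (Posz (foldr minn (b - c + r)
          ([seq a * nth 0 ds i + i | i <- iota 0 r.-1] ++ [:: a + r - 1])))).
Proof.
move=> hns harf hc Ge e0 a2 bc; split.
  exact: (@part1 G e a b hns Ge e0 a2).
move=> ds hds; exact: (@part2 G c a b ds harf hc a2 bc hds).
Qed.
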